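(* Let $\Omega\subset\mathbb{R}^n$ be open, $\omega$ a weight, $1\le p<q<\infty$, $a\in L^\infty(\Omega)$ non-negative, and $\varphi(x,t)=t^p+a(x)t^q$. Then $\varphi$ satisfies (A0), (A2)$_\omega$ and (Inc)$_p$.
   Context: A weight is a nonnegative locally integrable function $\omega$ on $\mathbb{R}^n$; $L^1(\Omega,\omega)$ is the set of measurable $h$ with $\int_\Omega|h|\omega\,dx<\infty$. (A0): there is $\beta_0\in(0,1]$ with $\varphi(x,\beta_0)\le1\le\varphi(x,1/\beta_0)$ for a.e. $x\in\Omega$. (A2)$_\omega$: for every $s>0$ there exist $\beta_2\in(0,1]$ and $h\in L^1(\Omega,\omega)\cap L^\infty(\Omega)$, $h\ge0$, such that $\varphi(x,\beta_2t)\le\varphi(y,t)+h(x)+h(y)$ for a.e. $x,y\in\Omega$ whenever $\varphi(y,t)\in[0,s]$. (Inc)$_p$: for a.e. $x$, $t\mapsto\varphi(x,t)/t^p$ is increasing on $(0,\infty)$. *)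

(* Defs.v *)
From mathcomp Require Import all_boot all_order all_algebra.
From mathcomp Require Import all_classical all_reals all_analysis.
Set Implicit Arguments.
Unset Strict Implicit.
Unset Printing Implicit Defensive.
Import Order.TTheory GRing.Theory Num.Theory.
Import numFieldNormedType.Exports.
Local Open Scope ring_scope.
Local Open Scope classical_set_scope.

(* R^n is modelled as n.-tuple R, carrying the product (= Borel) sigma-algebra
   of mathcomp-analysis (measure_tuple_display). *)
Definition tup2rV {R : realType} {n : nat} (x : n.-tuple R) : 'rV[R]_n :=
  \row_i tnth x i.

Definition Rn_open {R : realType} {n : nat} (O : set (n.-tuple R)) : Prop :=
  @open 'rV[R]_n (tup2rV @` O).

Definition Rn_compact {R : realType} {n : nat} (K : set (n.-tuple R)) : Prop :=
  @compact 'rV[R]_n (tup2rV @` K).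

Definition Rn_box {R : realType} {n : nat} (a b : n.-tuple R) : set (n.-tuple R) :=
  [set x | forall i : 'I_n, tnth a i < tnth x i <= tnth b i].

(* mu is the n-dimensional Lebesgue measure (on Borel sets): it gives every
   box its volume.  Such a measure exists and is unique. *)
Definition is_lebesgue_Rn {R : realType} {n : nat}
  (mu : {measure set (n.-tuple R) -> \bar R}) : Prop :=
  forall a b : n.-tuple R,
    mu (Rn_box a b) = (\prod_(i < n) Num.max (tnth b i - tnth a i) 0)%:E.

(* Lebesgue measurability of f on D: f agrees a.e. on D with a Borel function. *)
Definition Lmeasurable {R : realType} {n : nat}
  (mu : {measure set (n.-tuple R) -> \bar R}) (D : set (n.-tuple R))
  (f : n.-tuple R -> R) : Prop :=
  exists g : n.-tuple R -> R, measurable_fun D g /\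
    {ae mu, forall x, D x -> f x = g x}.

Definition is_weight {R : realType} {n : nat}
  (mu : {measure set (n.-tuple R) -> \bar R}) (w : n.-tuple R -> R) : Prop :=
  (forall x, 0 <= w x) /\
  exists g : n.-tuple R -> R, measurable_fun setT g /\
    {ae mu, forall x, w x = g x} /\
    forall K, Rn_compact K -> (\int[mu]_(x in K) (`|g x|)%:E < +oo)%E.

Definition in_Linfty {R : realType} {n : nat}
  (mu : {measure set (n.-tuple R) -> \bar R}) (D : set (n.-tuple R))
  (f : n.-tuple R -> R) : Prop :=
  Lmeasurable mu D f /\ exists M : R, {ae mu, forall x, D x -> `|f x| <= M}.

Definition in_L1w {R : realType} {n : nat}
  (mu : {measure set (n.-tuple R) -> \bar R}) (D : set (n.-tuple R))
  (w f : n.-tuple R -> R) : Prop :=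
  Lmeasurable mu D f /\
  exists g : n.-tuple R -> R, measurable_fun D g /\
    {ae mu, forall x, D x -> g x = `|f x| * w x} /\
    (\int[mu]_(x in D) (g x)%:E < +oo)%E.

Definition cond_A0 {R : realType} {n : nat}
  (mu : {measure set (n.-tuple R) -> \bar R}) (D : set (n.-tuple R))
  (phi : n.-tuple R -> R -> R) : Prop :=
  exists b0 : R, 0 < b0 <= 1 /\
    {ae mu, forall x, D x -> phi x b0 <= 1 <= phi x b0^-1}.

Definition cond_A2w {R : realType} {n : nat}
  (mu : {measure set (n.-tuple R) -> \bar R}) (D : set (n.-tuple R))
  (w : n.-tuple R -> R) (phi : n.-tuple R -> R -> R) : Prop :=
  forall s : R, 0 < s ->
  exists b2 : R, 0 < b2 <= 1 /\
  exists h : n.-tuple R -> R,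
    in_L1w mu D w h /\ in_Linfty mu D h /\ (forall x, D x -> 0 <= h x) /\
    exists N : set (n.-tuple R), mu.-negligible N /\
      forall x y, D x -> D y -> ~ N x -> ~ N y ->
      forall t : R, 0 <= t -> 0 <= phi y t <= s ->
        phi x (b2 * t) <= phi y t + h x + h y.

Definition cond_Inc {R : realType} {n : nat}
  (mu : {measure set (n.-tuple R) -> \bar R}) (D : set (n.-tuple R))
  (phi : n.-tuple R -> R -> R) (p : R) : Prop :=
  {ae mu, forall x, D x -> forall s t : R, 0 < s -> s <= t ->
     phi x s / s `^ p <= phi x t / t `^ p}.

(* Main.v *)
Require Import Defs.
From mathcomp Require Import all_boot all_order all_algebra.
From mathcomp Require Import all_classical all_reals all_analysis.
From mathcomp Require Import ring lra.
Import Order.TTheory GRing.Theory Num.Theory.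
Import numFieldNormedType.Exports.
Local Open Scope ring_scope.
Local Open Scope classical_set_scope.

Section Helpers.
Variable R : realType.

Lemma key_tq (p q s t : R) : 1 <= p -> p < q -> 0 <= t -> t `^ p <= s ->
  t `^ q <= (1 + s `^ (q - p)) * t `^ p.
Proof.
move=> Hp Hpq t0 ts.
have tp0 : 0 <= t `^ p by exact: powR_ge0.
have sq0 : 0 <= s `^ (q - p) by exact: powR_ge0.
have [t1|t1] := leP t 1.
  have : t `^ q <= t `^ p.
    move: t0; rewrite le_eqVlt => /predU1P[<-|tpos].
      by rewrite !powR0 ?gt_eqF //; lra.
    by apply: (ger_powR _ (ltW Hpq)); rewrite tpos t1.
  nra.
have tne : t != 0 by rewrite gt_eqF //; lra.
have -> : t `^ q = t `^ p * t `^ (q - p).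
  by rewrite -powRD ?tne ?implybT // addrC subrK.
have tle : t <= s.
  by apply: le_trans ts; apply: le1r_powR; lra.
have : t `^ (q - p) <= s `^ (q - p).
  have hqp : 0 <= q - p by lra.
  have i1 : t \in Num.nneg by rewrite nnegrE.
  have i2 : s \in Num.nneg by rewrite nnegrE; lra.
  exact: (ge0_ler_powR hqp i1 i2 tle).
move=> hh; nra.
Qed.

End Helpers.

Theorem lemma5p8 (R : realType) (n : nat)
  (mu : {measure set (n.-tuple R) -> \bar R}) (Hmu : is_lebesgue_Rn mu)
  (Omega : set (n.-tuple R)) (HOmega : Rn_open Omega)
  (w : n.-tuple R -> R) (Hw : is_weight mu w)
  (p q : R) (Hp : 1 <= p) (Hpq : p < q)
  (a : n.-tuple R -> R) (Ha : in_Linfty mu Omega a)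
  (Ha0 : {ae mu, forall x, Omega x -> 0 <= a x}) :
  let phi := fun (x : n.-tuple R) (t : R) => t `^ p + a x * t `^ q in
  cond_A0 mu Omega phi /\ cond_A2w mu Omega w phi /\ cond_Inc mu Omega phi p.
Proof.
move=> phi.
case: Ha => _ [M HM].
set K := `|M|.
have K0 : 0 <= K by exact: normr_ge0.
have G : {ae mu, forall x, Omega x -> 0 <= a x <= K}.
  apply: filterS (filterI HM Ha0) => x [H1 H2] Ox.
  rewrite H2 //=; have := H1 Ox; have := ler_norm (a x); have := ler_norm M.
  rewrite /K; lra.
split; [|split].
-
  exists (1 + K)^-1; split.
    by rewrite invr_gt0 invf_le1; lra.
  apply: filterS G => x Hx Ox.
  have /andP[a0 aK] := Hx Ox.
  have b0 : 0 < (1 + K)^-1 by rewrite invr_gt0; lra.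
  have b1 : (1 + K)^-1 <= 1 by rewrite invf_le1; lra.
  have bb : (1 + K)^-1 * (1 + K) = 1 by rewrite mulVf //; apply/eqP; lra.
  rewrite /phi invrK; apply/andP; split.
    have h1 : (1 + K)^-1 `^ p <= (1 + K)^-1 by apply: ge1r_powR; rewrite ?b0 ?b1.
    have h2 : (1 + K)^-1 `^ q <= (1 + K)^-1 by apply: ge1r_powR; rewrite ?b0 ?b1 //; lra.
    have h3 : 0 <= (1 + K)^-1 `^ q by exact: powR_ge0.
    nra.
  have h1 : 1 + K <= (1 + K) `^ p by apply: le1r_powR; lra.
  have h3 : 0 <= (1 + K) `^ q by exact: powR_ge0.
  nra.
-
  move=> s s0.
  set C := 1 + s `^ (q - p).
  have C1 : 1 <= C by rewrite /C; have := powR_ge0 s (q - p); lra.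
  set b := ((1 + K) * C)^-1.
  have bpos : 0 < b by rewrite /b invr_gt0; nra.
  have b1 : b <= 1 by rewrite /b invf_le1; nra.
  have bb : b * ((1 + K) * C) = 1 by rewrite /b mulVf //; apply/eqP; nra.
  exists b; split; first by rewrite bpos b1.
  exists (fun=> 0); split; [|split; [|split]].
  + split; first by exists (fun=> 0); split; [exact: measurable_cst|exact: aeW].
    exists (fun=> 0); split; first exact: measurable_cst.
    split; first by apply: aeW => x _; rewrite normr0 mul0r.
    by rewrite integral0 ltry.
  + split; first by exists (fun=> 0); split; [exact: measurable_cst|exact: aeW].
    by exists 0; apply: aeW => x _; rewrite normr0.
  + by [].
  + exists (~` [set x | Omega x -> 0 <= a x <= K]); split; first exact: G.
    move=> x y Ox Oy Nx Ny t t0 /andP[_ Hs].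
    have /andP[ax0 axK] := (contrapT Nx) Ox.
    have /andP[ay0 ayK] := (contrapT Ny) Oy.
    move: Hs; rewrite /phi => Hs.
    have tq0 : 0 <= t `^ q by exact: powR_ge0.
    have tp0 : 0 <= t `^ p by exact: powR_ge0.
    have tps : t `^ p <= s by nra.
    have kt := @key_tq R p q s t Hp Hpq t0 tps.
    rewrite -/C in kt.
    have bt0 : 0 <= b by exact: ltW.
    rewrite !powRM //.
    have h1 : b `^ p <= b by apply: ge1r_powR; rewrite ?bpos ?b1.
    have h2 : b `^ q <= b by apply: ge1r_powR; rewrite ?bpos ?b1 //; lra.
    have h3 : 0 <= b `^ q by exact: powR_ge0.
    have h4 : b `^ q * t `^ q <= b * (C * t `^ p) by nra.
    have h5 : a x * (b `^ q * t `^ q) <= K * (b * (C * t `^ p)).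
      apply: ler_pM => //; nra.
    have h6 : b `^ p * t `^ p <= b * t `^ p by nra.
    have h7 : b * t `^ p + K * (b * (C * t `^ p)) <= t `^ p.
      have hh : b * t `^ p <= b * (C * t `^ p).
        by apply: ler_wpM2l; [exact: ltW|nra].
      have e : b * (C * t `^ p) + K * (b * (C * t `^ p)) = (b * ((1 + K) * C)) * t `^ p by ring.
      rewrite bb mul1r in e; lra.
    nra.
-
  rewrite /cond_Inc; apply: filterS G => x Hx Ox s t s0 st.
  have /andP[a0 aK] := Hx Ox.
  rewrite /phi.
  have Ephi : forall u : R, 0 < u -> (u `^ p + a x * u `^ q) / u `^ p = 1 + a x * u `^ (q - p).
    move=> u u0.
    have -> : u `^ q = u `^ p * u `^ (q - p).
      have une : u != 0 by rewrite gt_eqF.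
      by rewrite -powRD ?une ?implybT // addrC subrK.
    have : u `^ p != 0 by rewrite gt_eqF // powR_gt0.
    by move=> hne; field; rewrite ?hne.
  rewrite !Ephi //; last lra.
  rewrite lerD2l; apply: ler_wpM2l => //.
  have hqp : 0 <= q - p by lra.
  have i1 : s \in Num.nneg by rewrite nnegrE; lra.
  have i2 : t \in Num.nneg by rewrite nnegrE; lra.
  exact: (ge0_ler_powR hqp i1 i2 st).
Qed.
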